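(* Let $N\ge2$ and let $W_N=|W_N\rangle\langle W_N|$, where $|W_N\rangle=\frac{1}{\sqrt N}(|10\cdots0\rangle+|01\cdots0\rangle+\cdots+|00\cdots1\rangle)$. Then $C_S(W_N)\ge N-1$.
   Context: $\mathbb{I},\sigma_X,\sigma_Y,\sigma_Z$ are the identity and Pauli matrices. The notation $\sum_\pi \mathbb{I}^{\otimes j}\otimes A^{\otimes (N-j)}$ denotes the sum, over all distinct placements, of tensor products in which exactly $j$ of the $N$ factors are $\mathbb{I}$ and the other $N-j$ are $A$ (each distinct arrangement counted once). Measurement complexity: for an $N$-qubit permutation-invariant operator $\rho$, $C_S(\rho)$ is the minimal $n_A$ such that there exist real $b_i,c_i,d_i$ and real $\alpha_{ij}$ ($1\le i\le n_A$, $0\le j\le N$) with $\rho=\sum_{i=1}^{n_A}\sum_{j=0}^{N}\alpha_{ij}\sum_\pi\mathbb{I}^{\otimes j}\otimes A_i^{\otimes(N-j)}$, $A_i=b_i\sigma_X+c_i\sigma_Y+d_i\sigma_Z$. *)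

(* Defs.v *)
From HB Require Import structures.
From mathcomp Require Import all_boot all_order all_algebra all_field.
Set Implicit Arguments. Unset Strict Implicit. Unset Printing Implicit Defensive.
Import Order.TTheory GRing.Theory Num.Theory.
Local Open Scope ring_scope.

(* Computational basis of N qubits: bit strings 'I_N -> bool
   (false = |0>, true = |1>).  An N-qubit operator is given by its matrix
   entries  <x| rho |y>. *)
Definition basis (N : nat) := {ffun 'I_N -> bool}.
Definition qop (N : nat) := basis N -> basis N -> algC.

Definition sI (a b : bool) : algC := if a == b then 1 else 0.
Definition sX (a b : bool) : algC := if a != b then 1 else 0.
Definition sY (a b : bool) : algC :=
  match a, b with
  | false, true => - 'i
  | true, false => 'i
  | _, _ => 0
  end.
Definition sZ (a b : bool) : algC :=
  if a == b then (if a then -1 else 1) else 0.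

Definition pauliA (b c d : algC) (x y : bool) : algC :=
  b * sX x y + c * sY x y + d * sZ x y.

(* sum_pi  I^{(x) j} (x) A^{(x)(N-j)} : sum over all placements, i.e. all
   sets S of j positions carrying the identity, the other positions A. *)
Definition symsum (N j : nat) (A : bool -> bool -> algC) : qop N :=
  fun x y => \sum_(S : {set 'I_N} | #|S| == j)
               \prod_(k < N) (if k \in S then sI (x k) (y k) else A (x k) (y k)).

Definition Wket (N : nat) (x : basis N) : algC :=
  if #|[set k | x k]| == 1%N then (sqrtC N%:R)^-1 else 0.
Definition Wop (N : nat) : qop N := fun x y => @Wket N x * (@Wket N y)^*.
Arguments Wop N : clear implicits.

Definition CS_decomp (N : nat) (rho : qop N) (nA : nat) : Prop :=
  exists (b c d : 'I_nA -> algC) (alpha : 'I_nA -> 'I_N.+1 -> algC),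
    (forall i, b i \is Num.real) /\ (forall i, c i \is Num.real) /\
    (forall i, d i \is Num.real) /\ (forall i j, alpha i j \is Num.real) /\
    forall x y : basis N,
      rho x y = \sum_(i < nA) \sum_(j < N.+1)
                  alpha i j * symsum j (pauliA (b i) (c i) (d i)) x y.

(* Main.v *)
Require Import Defs.
From HB Require Import structures.
From mathcomp Require Import all_boot all_order all_algebra all_field.
From mathcomp Require Import ring zify.
Import Order.TTheory GRing.Theory Num.Theory.
Local Open Scope ring_scope.

Lemma sum2_prod (N : nat) (G : 'I_N -> bool -> bool -> algC) :
  \sum_(x : basis N) \sum_(y : basis N) \prod_(k < N) G k (x k) (y k) =
  \prod_(k < N) \sum_(u : bool) \sum_(v : bool) G k u v.
Proof.
rewrite bigA_distr_bigA /=; apply: eq_bigr => x _.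
by rewrite bigA_distr_bigA.
Qed.

Lemma sum_unique (T : finType) (f : T -> T -> algC) x0 y0 :
  (forall x y, f x y != 0 -> x = x0 /\ y = y0) ->
  \sum_x \sum_y f x y = f x0 y0.
Proof.
move=> H; rewrite (bigD1 x0) //= (bigD1 y0) //=.
rewrite [X in _ + X + _]big1 ?addr0; last first.
  move=> y hy; apply/eqP; apply: contraR hy => /H [_ ->]; by rewrite eqxx.
rewrite big1 ?addr0 // => x hx; apply: big1 => y _; apply/eqP.
by apply: contraR hx => /H [-> _]; rewrite eqxx.
Qed.

Definition Cf (N nA : nat) (beta r : 'I_nA -> algC) (s1 s2 : 'I_N)
  (k : 'I_N) (u v : bool) : algC :=
  if k == s1 then (if ~~ u && v then 1 else 0)
  else if k == s2 then (if v then 0 else 1)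
  else match (insub (val k) : option 'I_nA) with
  | Some i => if beta i != 0 then
               (if u then (if v then -1 else 0) else (if v then r i else 1))
             else (if u || v then 0 else 1)
  | None => if u || v then 0 else 1
  end.
Arguments Cf {N nA}.

Lemma Cf_false N nA beta r s1 s2 k u :
  k != s1 -> k != s2 -> @Cf N nA beta r s1 s2 k u false = (if u then 0 else 1).
Proof.
move=> h1 h2; rewrite /Cf (negbTE h1) (negbTE h2).
by case: (insub _) => [i|]; [case: (beta i != 0)|]; case: u.
Qed.

Lemma local_nonz N nA (b c d beta r : 'I_nA -> algC) (s1 s2 k : 'I_N) i :
  beta i = b i - 'i * c i -> r i = - (d i *+ 2) / beta i ->
  k != s1 -> k != s2 -> insub (val k) = Some i -> beta i != 0 ->
  (\sum_u \sum_v sI u v * Cf beta r s1 s2 k u v = 0) /\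
  (\sum_u \sum_v pauliA (b i) (c i) (d i) u v * Cf beta r s1 s2 k u v = 0).
Proof.
move=> hb hr h1 h2 hk hnz.
rewrite /Cf (negbTE h1) (negbTE h2) hk hnz !big_bool /=.
rewrite /sI /pauliA /sX /sY /sZ /=; split; first by ring.
rewrite hr; move: hnz; rewrite hb => hnz.
field. exact: hnz.
Qed.

Lemma local_z N nA (b c d beta r : 'I_nA -> algC) (s1 s2 : 'I_N) i :
  b i - 'i * c i = 0 ->
  (\sum_u \sum_v sI u v * Cf beta r s1 s2 s1 u v = 0) /\
  (\sum_u \sum_v pauliA (b i) (c i) (d i) u v * Cf beta r s1 s2 s1 u v = 0).
Proof.
move=> hz; rewrite /Cf eqxx !big_bool /= /sI /pauliA /sX /sY /sZ /=; split.
  by ring.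
rewrite -[RHS]hz; ring.
Qed.

Lemma term0 N (A : bool -> bool -> algC) (C : 'I_N -> bool -> bool -> algC) k0 j :
  (\sum_u \sum_v sI u v * C k0 u v = 0) -> (\sum_u \sum_v A u v * C k0 u v = 0) ->
  \sum_(x : basis N) \sum_(y : basis N) symsum j A x y * \prod_(k < N) C k (x k) (y k) = 0.
Proof.
move=> h1 h2.
transitivity (\sum_(S : {set 'I_N} | #|S| == j) \sum_(x : basis N) \sum_(y : basis N)
   \prod_(k < N) ((if k \in S then sI else A) (x k) (y k) * C k (x k) (y k))).
  symmetry; rewrite exchange_big; apply: eq_bigr => x _.
  rewrite exchange_big; apply: eq_bigr => y _.
  rewrite /symsum big_distrl; apply: eq_bigr => S _; rewrite big_split /=.
  by congr (_ * _); apply: eq_bigr => k _ /=; case: (k \in S).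
apply: big1 => S _.
rewrite (@sum2_prod N (fun k u v => (if k \in S then sI else A) u v * C k u v)) (bigD1 k0) //=.
by case: (k0 \in S) => /=; rewrite ?h1 ?h2 mul0r.
Qed.

Theorem corollary2 (N : nat) (hN : (2 <= N)%N) (nA : nat) :
  CS_decomp (Wop N) nA -> (N.-1 <= nA)%N.
Proof.
case: N hN => [|[|N']] // _.
move=> [b [c [d [alpha [_ [_ [_ [_ H]]]]]]]].
rewrite leqNgt; apply/negP => hlt.
have hle : (nA <= N'.+2)%N by apply: (leq_trans (ltnW hlt)); rewrite ltnW.
pose beta i := b i - 'i * c i.
pose r i := - (d i *+ 2) / beta i.
pose s1 : 'I_N'.+2 := ord_max.
pose s2 : 'I_N'.+2 := inord N'.
have vs2 : nat_of_ord s2 = N' by rewrite /s2 inordK.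
pose C := Cf beta r s1 s2.
pose P (x y : basis N'.+2) := \prod_(k < N'.+2) C k (x k) (y k).
have H0 : \sum_(x : basis N'.+2) \sum_(y : basis N'.+2) Wop _ x y * P x y = 0.
  have E : forall x y, Wop _ x y * P x y = \sum_(i < nA) \sum_(j < N'.+3)
      alpha i j * (symsum j (pauliA (b i) (c i) (d i)) x y * P x y).
    move=> x y; rewrite H big_distrl; apply: eq_bigr => i _.
    by rewrite big_distrl; apply: eq_bigr => j _; rewrite mulrA.
  under eq_bigr => x _ do under eq_bigr => y _ do rewrite E.
  under eq_bigr => x _ do rewrite exchange_big.
  rewrite exchange_big; apply: big1 => i _.
  under eq_bigr => x _ do rewrite exchange_big.
  rewrite exchange_big; apply: big1 => j _.
  have -> : \sum_(x : basis N'.+2) \sum_(y : basis N'.+2)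
      alpha i j * (symsum j (pauliA (b i) (c i) (d i)) x y * P x y) =
      alpha i j * \sum_(x : basis N'.+2) \sum_(y : basis N'.+2)
      (symsum j (pauliA (b i) (c i) (d i)) x y * P x y).
    by rewrite big_distrr; apply: eq_bigr => x _; rewrite big_distrr.
  apply/eqP; rewrite mulf_eq0; apply/orP; right; apply/eqP.
  case: (eqVneq (beta i) 0) => hz.
    have [h1 h2] := @local_z _ _ b c d beta r s1 s2 i hz.
    exact: (@term0 _ _ C _ _ h1 h2).
  pose k0 : 'I_N'.+2 := widen_ord hle i.
  have hk1 : k0 != s1.
    apply/eqP => /(congr1 val) /=; have := ltn_ord i; lia.
  have hk2 : k0 != s2.
    apply/eqP => /(congr1 val) /=; rewrite vs2; have := ltn_ord i; lia.
  have hins : insub (val k0) = Some i by rewrite /= valK.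
  have [h1 h2] := @local_nonz _ _ b c d beta r s1 s2 k0 i erefl erefl hk1 hk2 hins hz.
  exact: (@term0 _ _ C _ _ h1 h2).
pose e1 : basis N'.+2 := [ffun k => k == s1].
pose e2 : basis N'.+2 := [ffun k => k == s2].
have s12 : s2 != s1 by apply/eqP => /(congr1 val) /=; rewrite vs2; lia.
have CF : forall k u, k != s1 -> k != s2 -> C k u false = if u then 0 else 1.
  by move=> k u; exact: Cf_false.
have Cs1 : forall u v, C s1 u v = if ~~u && v then 1 else 0.
  by move=> u v; rewrite /C /Cf eqxx.
have Cs2 : forall u v, C s2 u v = if v then 0 else 1.
  by move=> u v; rewrite /C /Cf (negbTE s12) eqxx.
have Wk : forall (x : basis N'.+2) s, (forall k, x k = (k == s)) ->
    Wket x = (sqrtC (N'.+2)%:R)^-1.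
  move=> x s hx; rewrite /Wket.
  have -> : [set k | x k] = [set s] by apply/setP => k; rewrite !inE hx.
  by rewrite cards1.
have Wnz : forall x : basis N'.+2, Wket x != 0 -> #|[set k | x k]| == 1%N.
  by move=> x; rewrite /Wket; case: ifP => // _; rewrite eqxx.
have uniq : forall x y, Wop _ x y * P x y != 0 -> x = e2 /\ y = e1.
  move=> x y; rewrite mulf_eq0 negb_or => /andP [hW hP].
  have hC : forall k, C k (x k) (y k) != 0.
    move=> k; apply: contra hP => /eqP h0; by rewrite /P (bigD1 k) //= h0 mul0r.
  move: hW; rewrite /Wop mulf_eq0 negb_or conjC_eq0 => /andP [/Wnz hx /Wnz hy].
  have := hC s1; rewrite Cs1.
  case hxs1 : (x s1); first by rewrite /= eqxx.
  case hys1 : (y s1); last by rewrite /= eqxx.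
  move=> _.
  have ey : forall k, y k = (k == s1).
    move=> k; move/cards1P: hy => [a ha].
    have : s1 \in [set k | y k] by rewrite inE hys1.
    rewrite ha inE => /eqP ea; subst a.
    by move/setP: ha => /(_ k); rewrite !inE.
  have ex : forall k, x k = (k == s2).
    move/cards1P: hx => [a ha].
    have xa : x a by move/setP: ha => /(_ a); rewrite !inE eqxx.
    have ea : a = s2.
      apply/eqP; apply: contraT => ha2.
      have ha1 : a != s1 by apply: contraTneq xa => ->; rewrite hxs1.
      by have := hC a; rewrite ey (negbTE ha1) CF // xa eqxx.
    subst a; move=> k; by move/setP: ha => /(_ k); rewrite !inE.
  by split; apply/ffunP => k; rewrite ffunE.
have H1 : \sum_(x : basis N'.+2) \sum_(y : basis N'.+2) Wop _ x y * P x y != 0.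
  rewrite (@sum_unique _ (fun x y => Wop _ x y * P x y) e2 e1 uniq) mulf_neq0 //.
    rewrite /Wop (Wk e2 s2); last by move=> k; rewrite ffunE.
    rewrite (Wk e1 s1); last by move=> k; rewrite ffunE.
    by rewrite mulf_neq0 // ?conjC_eq0 invr_eq0 sqrtC_eq0 pnatr_eq0.
  have s21 : s1 != s2 by rewrite eq_sym.
  rewrite /P big1 ?oner_eq0 // => k _; rewrite !ffunE.
  case: (eqVneq k s1) => [->|h1]; first by rewrite Cs1 ?eqxx (negbTE s21).
  case: (eqVneq k s2) => [->|h2]; first by rewrite Cs2 ?eqxx ?(negbTE s12).
  by rewrite CF.
by rewrite H0 eqxx in H1.
Qed.
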